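(* Let $I=[a,b)\subseteq[0,1)$ with $a<b$, let $r$ be uniformly distributed on $[a,b)$, and let $\tilde x^n$ be obtained from $r$ by the rule: $\hat x^n=\min\{y^n:F_I(y^n)>r\}$ (in Gray order); $\tilde x^n=\hat x^n+1$ if $r\ge\bar F_I(\hat x^n)$ and $\hat x^n$ is not the largest element in Gray order; otherwise $\tilde x^n=\hat x^n$. Then $$\mathbb{E}\big[\lambda_h(\tilde x^n)\big]>nH(X)-1-2\log_2\rho,$$ where $H(X)=-p(0)\log_2p(0)-p(1)\log_2p(1)$.
   Context: Let $p$ be a probability distribution on $\{0,1\}$ with $p(0),p(1)\in(0,1)$, $p(0)\ne p(1)$, $\rho=\max\{p(0)/p(1),p(1)/p(0)\}$, and $p(x^n)=\prod_i p(x_i)$. Gray code is $g(x^n)=x^n\oplus(0,x_1,\dots,x_{n-1})$; Gray order $\preceq_G$ on $\{0,1\}^n$ is $x^n\preceq_G y^n$ iff $g^{-1}(x^n)\preceq_L g^{-1}(y^n)$ (lexicographic). $x^n+1$ and $x^n-1$ denote the immediate successor and predecessor in Gray order. $F(x^n)=\sum_{a^n\preceq_G x^n}p(a^n)$, with $F(x^n-1):=0$ if $x^n$ is the smallest element. For $I=[a,b)$: $F_I(x^n)=a+(b-a)F(x^n)$; $\alpha_h:=\rho$; $\lambda_h(x^n)=\lfloor-\log_2(\alpha_h(b-a)p(x^n))\rfloor$; $\bar F_I(x^n)=\lfloor F_I(x^n-1)+2^{-\lambda_h(x^n)}\rfloor_{\lambda_h(x^n)}$, where $\lfloor r\rfloor_l=2^{-l}\lfloor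 2^lr\rfloor$ for real $r\ge0$ and integer $l$. *)

(* Defs.v *)
From Stdlib Require Import Reals Lra Lia ZArith Arith List.
Open Scope R_scope.

(* Binary strings x^n are lists of booleans (false = 0, true = 1), x_1 first. *)

(* Binary representation of k with n bits, most significant bit first.
   As k ranges over 0 .. 2^n-1, [bin n k] enumerates {0,1}^n in
   lexicographic order. *)
Fixpoint bin (n k : nat) : list bool :=
  match n with
  | O => nil
  | S m => Nat.testbit k m :: bin m k
  end.

Fixpoint gray_aux (prev : bool) (x : list bool) : list bool :=
  match x with
  | nil => nil
  | h :: t => xorb h prev :: gray_aux h t
  end.
Definition gray (x : list bool) : list bool := gray_aux false x.

(* The element of rank k in Gray order: x ≼_G y iff g^{-1}(x) ≼_L g^{-1}(y),
   so the k-th element (k = 0 .. 2^n-1) in Gray order is g(bin n k). *)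
Definition gelem (n k : nat) : list bool := gray (bin n k).

Definition prob (p : bool -> R) (x : list bool) : R :=
  fold_right (fun c acc => p c * acc) 1 x.

Definition log2 (x : R) : R := ln x / ln 2.

Definition rho (p : bool -> R) : R := Rmax (p false / p true) (p true / p false).

Definition Fr (p : bool -> R) (n k : nat) : R :=
  sum_f_R0 (fun j => prob p (gelem n j)) k.

Definition Fprev (p : bool -> R) (n k : nat) : R :=
  match k with O => 0 | S k' => Fr p n k' end.

Definition FI (p : bool -> R) (a b : R) (n k : nat) : R := a + (b - a) * Fr p n k.
Definition FIprev (p : bool -> R) (a b : R) (n k : nat) : R :=
  a + (b - a) * Fprev p n k.

(* floor (Int_part is the floor function) *)
Definition floorZ (x : R) : Z := Int_part x.

(* lambda_h(x^n) = floor(-log2(alpha_h (b-a) p(x^n))), alpha_h = rho *)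
Definition lambda_h (p : bool -> R) (a b : R) (n k : nat) : Z :=
  floorZ (- log2 (rho p * (b - a) * prob p (gelem n k))).

Definition floor_l (r : R) (l : Z) : R :=
  powerRZ 2 (- l) * IZR (floorZ (powerRZ 2 l * r)).

Definition Fbar (p : bool -> R) (a b : R) (n k : nat) : R :=
  floor_l (FIprev p a b n k + powerRZ 2 (- lambda_h p a b n k)) (lambda_h p a b n k).

(* smallest k' >= k (at most k + fuel) satisfying f, defaulting to k + fuel *)
Fixpoint first_from (f : nat -> bool) (k fuel : nat) : nat :=
  match fuel with
  | O => k
  | S fu => if f k then k else first_from f (S k) fu
  end.

(* rank of hat x^n = min { y^n : F_I(y^n) > r } in Gray order
   (well defined for r < b; default: the largest element) *)
Definition xhat (p : bool -> R) (a b : R) (n : nat) (r : R) : nat :=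
  first_from (fun k => if Rlt_dec r (FI p a b n k) then true else false)
             0 (2 ^ n - 1).

Definition xtilde (p : bool -> R) (a b : R) (n : nat) (r : R) : nat :=
  let k := xhat p a b n r in
  if Rle_dec (Fbar p a b n k) r then
    (if Nat.ltb k (2 ^ n - 1) then S k else k)
  else k.

Definition Hent (p : bool -> R) : R :=
  - p false * log2 (p false) - p true * log2 (p true).

(* Main.v *)
Require Import Defs.
From Stdlib Require Import Reals Lra Lia ZArith Arith List.
From Coquelicot Require Import Coquelicot.
Open Scope R_scope.

Lemma bin_ext n x y : (forall m, (m < n)%nat -> Nat.testbit x m = Nat.testbit y m) -> bin n x = bin n y.
Proof.
  induction n; simpl; intros H; auto.
  rewrite H by lia. f_equal. apply IHn. intros; apply H; lia.
Qed.

Lemma pow2_pos n : (0 < 2 ^ n)%nat.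
Proof. apply Nat.neq_0_lt_0, Nat.pow_nonzero; lia. Qed.

Lemma bin_low n k : (k < 2^n)%nat -> bin (S n) k = false :: bin n k.
Proof.
  intros H. simpl. f_equal.
  apply (Nat.testbit_unique k n false k 0); auto; simpl; lia.
Qed.

Lemma bin_high n k : (k < 2^n)%nat -> bin (S n) (2^n + k) = true :: bin n k.
Proof.
  intros H. simpl. f_equal.
  - apply (Nat.testbit_unique _ n true k 0); auto; simpl; lia.
  - apply bin_ext. intros m Hm.
    rewrite <- (Nat.mod_pow2_bits_low (2^n+k) n m Hm).
    replace (2^n + k)%nat with (k + 1 * 2^n)%nat by lia.
    rewrite Nat.Div0.mod_add by (pose proof (pow2_pos n); lia).
    rewrite Nat.mod_small; auto.
Qed.

Lemma bin_zero n : bin n 0 = repeat false n.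
Proof. induction n; simpl; auto. rewrite IHn, Nat.bits_0. reflexivity. Qed.

Lemma bin_ones n : bin n (2^n - 1) = repeat true n.
Proof.
  induction n; simpl; auto.
  pose proof (pow2_pos n).
  replace (2^n + (2^n + 0) - 1)%nat with (2^n + (2^n - 1))%nat by lia.
  change (bin (S n) (2^n + (2^n-1)) = true :: repeat true n).
  rewrite bin_high by lia. rewrite IHn. reflexivity.
Qed.

Lemma gray_rep c n : gray_aux c (repeat c n) = repeat false n.
Proof. induction n; simpl; auto. rewrite IHn. destruct c; reflexivity. Qed.

Lemma gray_turn n : gray_aux false (repeat true n) = gray_aux true (repeat false n).
Proof.
  destruct n; simpl; auto. rewrite !gray_rep. reflexivity.
Qed.

Fixpoint sumN (f : nat -> R) (N : nat) : R :=
  match N with O => 0 | S m => sumN f m + f m end.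

Lemma sumN_R0 f k : sum_f_R0 f k = sumN f (S k).
Proof. induction k; simpl; auto. lra. simpl in IHk. rewrite IHk. reflexivity. Qed.

Lemma sumN_split f M N : sumN f (M + N) = sumN f M + sumN (fun i => f (M + i)%nat) N.
Proof. induction N; simpl. rewrite Nat.add_0_r; lra. rewrite Nat.add_succ_r. simpl. rewrite IHN. lra. Qed.

Lemma sumN_ext f g N : (forall i, (i < N)%nat -> f i = g i) -> sumN f N = sumN g N.
Proof. induction N; simpl; intros; auto. rewrite IHN by (intros; apply H; lia). rewrite H by lia. reflexivity. Qed.

Lemma sumN_scal a f N : sumN (fun i => a * f i) N = a * sumN f N.
Proof. induction N; simpl. ring. rewrite IHN; ring. Qed.

Lemma sumN_plus f g N : sumN (fun i => f i + g i) N = sumN f N + sumN g N.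
Proof. induction N; simpl. ring. rewrite IHN; ring. Qed.

Section P.
Variable p : bool -> R.
Hypothesis hp0 : 0 < p false < 1.
Hypothesis hp1 : 0 < p true < 1.
Hypothesis hsum : p false + p true = 1.

Lemma pc_pos c : 0 < p c.
Proof. destruct c; lra. Qed.

Lemma pc_sum c : p c + p (negb c) = 1.
Proof. destruct c; simpl; lra. Qed.

Lemma prob_pos x : 0 < prob p x.
Proof. induction x; simpl. lra. pose proof (pc_pos a). nra. Qed.

Definition nll (x : list bool) : R := fold_right (fun c acc => - log2 (p c) + acc) 0 x.

Lemma log2_mult x y : 0 < x -> 0 < y -> log2 (x * y) = log2 x + log2 y.
Proof. intros; unfold log2; rewrite ln_mult by auto. field. 
 assert (0 < ln 2). { rewrite <- ln_1. apply ln_increasing; lra. } lra. Qed.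

Lemma nll_prob x : nll x = - log2 (prob p x).
Proof.
  induction x; simpl. unfold log2; rewrite ln_1; field. 
  assert (0 < ln 2). { rewrite <- ln_1. apply ln_increasing; lra. } lra.
  rewrite log2_mult by (apply pc_pos || apply prob_pos). rewrite IHx. ring.
Qed.

Definition T c n := sumN (fun k => prob p (gray_aux c (bin n k))) (2^n).
Definition E c n := sumN (fun k => prob p (gray_aux c (bin n k)) * nll (gray_aux c (bin n k))) (2^n).

Lemma halves (F : list bool -> R) n :
  sumN (fun k => F (bin (S n) k)) (2^(S n)) =
  sumN (fun k => F (false :: bin n k)) (2^n) + sumN (fun k => F (true :: bin n k)) (2^n).
Proof.
  replace (2^(S n))%nat with (2^n + 2^n)%nat by (simpl; lia).
  rewrite sumN_split. f_equal; apply sumN_ext; intros.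
  rewrite bin_low; auto. rewrite bin_high; auto.
Qed.

Lemma T_one n : forall c, T c n = 1.
Proof.
  induction n; intros c. unfold T; simpl. lra.
  unfold T. rewrite (halves (fun x => prob p (gray_aux c x))). simpl.
  rewrite !sumN_scal. fold (T false n). fold (T true n). rewrite !IHn.
  destruct c; simpl; lra.
Qed.

Lemma E_val n : forall c, E c n = INR n * Hent p.
Proof.
  induction n; intros c. unfold E; simpl. lra.
  unfold E. rewrite S_INR. rewrite (halves (fun x => prob p (gray_aux c x) * nll (gray_aux c x))). simpl.
  assert (G : forall d c', sumN (fun k => p d * prob p (gray_aux c' (bin n k)) * (- log2 (p d) + nll (gray_aux c' (bin n k)))) (2^n)
     = p d * (- log2 (p d)) * T c' n + p d * E c' n).
  { intros. unfold T, E. rewrite <- !sumN_scal, <- sumN_plus. apply sumN_ext. intros; ring. }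
  rewrite !G, !T_one, !IHn. unfold Hent. destruct c; simpl; replace (p true) with (1 - p false) by lra; ring.
Qed.

Lemma sum_prob n : sumN (fun k => prob p (gelem n k)) (2^n) = 1.
Proof. apply T_one. Qed.

Lemma sum_ent n : sumN (fun k => prob p (gelem n k) * (- log2 (prob p (gelem n k)))) (2^n) = INR n * Hent p.
Proof. rewrite <- (E_val n false). unfold E. apply sumN_ext. intros; rewrite nll_prob; reflexivity. Qed.

Lemma rho_ge c : p (negb c) <= rho p * p c.
Proof.
  pose proof (pc_pos c). unfold rho.
  destruct c; simpl.
  - apply Rle_trans with (p false / p true * p true). right; field; lra.
    apply Rmult_le_compat_r; [lra| apply Rmax_l].
  - apply Rle_trans with (p true / p false * p false). right; field; lra.
    apply Rmult_le_compat_r; [lra| apply Rmax_r].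
Qed.

Lemma adj n : forall c k, (S k < 2^n)%nat ->
  prob p (gray_aux c (bin n (S k))) <= rho p * prob p (gray_aux c (bin n k)).
Proof.
  induction n; intros c k H. simpl in H; lia.
  pose proof (pow2_pos n).
  assert (H2 : (2^S n = 2^n + 2^n)%nat) by (simpl; lia).
  destruct (lt_dec (S k) (2^n)).
  - rewrite !bin_low by lia. simpl. pose proof (IHn false k l). pose proof (pc_pos c).
    apply Rle_trans with (p (xorb false c) * (rho p * prob p (gray_aux false (bin n k)))).
    apply Rmult_le_compat_l; auto. destruct c; simpl; lra. right; simpl; ring.
  - destruct (Nat.eq_dec (S k) (2^n)).
    + rewrite e. replace k with (2^n - 1)%nat by lia.
      rewrite (bin_low n (2^n-1)) by lia. replace (bin (S n) (2^n)) with (bin (S n) (2^n + 0)) by (f_equal; lia).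
      rewrite bin_high by lia. rewrite bin_zero, bin_ones. simpl.
      rewrite gray_turn. pose proof (prob_pos (gray_aux true (repeat false n))).
      pose proof (rho_ge c).
      replace (xorb false c) with c by (destruct c; reflexivity). change (if c then false else true) with (negb c). rewrite <- Rmult_assoc; apply Rmult_le_compat_r; lra.
    + replace k with (2^n + (k - 2^n))%nat by lia.
      replace (S (2^n + (k - 2^n))) with (2^n + S (k - 2^n))%nat by lia.
      rewrite !bin_high by lia. simpl. pose proof (IHn true (k - 2^n)%nat ltac:(lia)).
      pose proof (pc_pos (xorb true c)).
      apply Rle_trans with (p (xorb true c) * (rho p * prob p (gray_aux true (bin n (k - 2^n))))).
      apply Rmult_le_compat_l; lra. right; simpl; ring.
Qed.

End P.

Lemma first_from_spec (g : nat -> bool) fuel : forall s k,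
  (s <= k <= s + fuel)%nat -> g k = true -> (forall j, (s <= j < k)%nat -> g j = false) ->
  first_from g s fuel = k.
Proof.
  induction fuel; intros s k H1 H2 H3; simpl.
  - lia.
  - destruct (g s) eqn:E.
    + destruct (Nat.eq_dec s k); auto. rewrite H3 in E; [discriminate|lia].
    + assert (s <> k) by (intro; subst; congruence).
      apply IHfuel; auto. lia. intros; apply H3; lia.
Qed.

Lemma ln2_pos : 0 < ln 2.
Proof. rewrite <- ln_1. apply ln_increasing; lra. Qed.

Lemma sumN_lt f g N : (0 < N)%nat -> (forall i, (i < N)%nat -> f i < g i) -> sumN f N < sumN g N.
Proof.
  induction N; intros H0 H; simpl. lia.
  destruct N. simpl. specialize (H 0%nat ltac:(lia)). lra.
  assert (sumN f (S N) < sumN g (S N)) by (apply IHN; [lia| intros; apply H; lia]).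
  specialize (H (S N) ltac:(lia)). lra.
Qed.

Lemma scalR (x y : R) : scal x y = x * y. Proof. reflexivity. Qed.
Lemma plusR (x y : R) : plus x y = x + y. Proof. reflexivity. Qed.

Lemma constR (c x y : R) : is_RInt (fun _ => c) x y ((y - x) * c).
Proof. rewrite <- scalR. exact (@is_RInt_const R_NormedModule x y c). Qed.
Lemma ChaslesR (f : R -> R) x y z l1 l2 : is_RInt f x y l1 -> is_RInt f y z l2 -> is_RInt f x z (l1 + l2).
Proof. rewrite <- plusR. exact (@is_RInt_Chasles R_NormedModule f x y z l1 l2). Qed.

Section A.
Variable p : bool -> R.
Hypothesis hp0 : 0 < p false < 1.
Hypothesis hp1 : 0 < p true < 1.
Hypothesis hsum : p false + p true = 1.
Variables a b : R.
Hypothesis ha : 0 <= a.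
Hypothesis hab : a < b.
Hypothesis hb : b <= 1.
Variable n : nat.

Let N := (2 ^ n)%nat.
Let q k := prob p (gelem n k).
Let Sm k := sumN q k.
Let u k := a + (b - a) * Sm k.
Let f r := IZR (lambda_h p a b n (xtilde p a b n r)).
Let lam k := IZR (lambda_h p a b n k).

Lemma q_pos k : 0 < q k.
Proof. apply prob_pos; auto. Qed.

Lemma Sm_mono i j : (i <= j)%nat -> Sm i <= Sm j.
Proof.
  induction 1. lra. unfold Sm in *; simpl. pose proof (q_pos m). lra.
Qed.

Lemma u_mono i j : (i <= j)%nat -> u i <= u j.
Proof. intros H. unfold u. pose proof (Sm_mono i j H). nra. Qed.

Lemma u_step k : u (S k) - u k = (b - a) * q k.
Proof. unfold u, Sm; simpl. ring. Qed.

Lemma FI_u k : FI p a b n k = u (S k).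
Proof. unfold FI, Fr, u, Sm. rewrite sumN_R0. reflexivity. Qed.

Lemma FIprev_u k : FIprev p a b n k = u k.
Proof. unfold FIprev, Fprev, u, Sm. destruct k. simpl. ring. rewrite <- sumN_R0. reflexivity. Qed.

Lemma u_N : u N = b.
Proof. unfold u, Sm, q, N. rewrite sum_prob; auto. ring. Qed.

Lemma xhat_cell k r : (k < N)%nat -> u k <= r < u (S k) -> xhat p a b n r = k.
Proof.
  intros Hk Hr. unfold xhat. apply first_from_spec.
  - fold N. lia.
  - rewrite FI_u. destruct (Rlt_dec r (u (S k))); auto; lra.
  - intros j Hj. rewrite FI_u. destruct (Rlt_dec r (u (S j))); auto.
    pose proof (u_mono (S j) k ltac:(lia)). lra.
Qed.

Lemma rho_ge1 : 1 <= rho p.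
Proof.
  unfold rho. destruct (Rle_dec (p true) (p false)).
  - apply Rle_trans with (p false / p true); [|apply Rmax_l].
    apply Rmult_le_reg_r with (p true). lra. unfold Rdiv; rewrite Rmult_assoc, Rinv_l by lra. lra.
  - apply Rle_trans with (p true / p false); [|apply Rmax_r].
    apply Rmult_le_reg_r with (p false). lra. unfold Rdiv; rewrite Rmult_assoc, Rinv_l by lra. lra.
Qed.

Lemma log2_le x y : 0 < x -> x <= y -> log2 x <= log2 y.
Proof. intros. unfold log2. pose proof ln2_pos. apply Rmult_le_compat_r.
 left; apply Rinv_0_lt_compat; auto. apply ln_le; auto. Qed.

Lemma log2_1 : log2 1 = 0.
Proof. unfold log2; rewrite ln_1; field. pose proof ln2_pos; lra. Qed.

Lemma lam_lb k : lam k > - log2 (q k) - log2 (rho p) - 1.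
Proof.
  unfold lam, lambda_h, floorZ. fold (q k).
  pose proof (base_Int_part (- log2 (rho p * (b - a) * q k))).
  pose proof rho_ge1. pose proof (q_pos k).
  rewrite !log2_mult in H |- * by (auto; try nra).
  assert (log2 (b - a) <= 0). { rewrite <- log2_1. apply log2_le; lra. }
  lra.
Qed.

Definition cc k := - log2 (q k) - 2 * log2 (rho p) - 1.

Lemma log2rho_nn : 0 <= log2 (rho p).
Proof. rewrite <- log2_1. apply log2_le. lra. apply rho_ge1. Qed.

Lemma lam_k k : lam k > cc k.
Proof. pose proof (lam_lb k). pose proof log2rho_nn. unfold cc. lra. Qed.

Lemma lam_Sk k : (S k < N)%nat -> lam (S k) > cc k.
Proof.
  intros H. pose proof (lam_lb (S k)). unfold cc.
  assert (q (S k) <= rho p * q k) by (apply adj; auto).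
  pose proof rho_ge1. pose proof (q_pos k). pose proof (q_pos (S k)).
  assert (log2 (q (S k)) <= log2 (rho p) + log2 (q k)).
  { rewrite <- log2_mult by lra. apply log2_le; auto. }
  lra.
Qed.


Definition tk k := Rmax (u k) (Rmin (Fbar p a b n k) (u (S k))).
Definition lam' k := if Nat.ltb k (N - 1) then lam (S k) else lam k.
Definition Vk k := lam k * (tk k - u k) + lam' k * (u (S k) - tk k).

Lemma cell k : (k < N)%nat -> is_RInt f (u k) (u (S k)) (Vk k).
Proof.
  intros Hk.
  assert (HU : u k < u (S k)). { rewrite <- (Rplus_0_r (u k)). pose proof (u_step k). pose proof (q_pos k). nra. }
  assert (Ht : u k <= tk k <= u (S k)).
  { unfold tk. split. apply Rmax_l. apply Rmax_lub. lra. apply Rmin_r. }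
  replace (Vk k) with ((tk k - u k) * lam k + (u (S k) - tk k) * lam' k) by (unfold Vk; ring).
  apply ChaslesR with (tk k).
  - eapply is_RInt_ext. 2: apply constR.
    intros r Hr. rewrite Rmin_left in Hr by lra. rewrite Rmax_right in Hr by lra.
    unfold f. unfold xtilde. rewrite (xhat_cell k r) by (auto; lra).
    destruct (Rle_dec (Fbar p a b n k) r); [|reflexivity].
    exfalso. unfold tk in Hr. destruct Hr as [H1 H2].
    revert H2. unfold Rmax, Rmin. destruct (Rle_dec (Fbar p a b n k) (u (S k))); 
     destruct (Rle_dec (u k) _); lra.
  - eapply is_RInt_ext. 2: apply constR.
    intros r Hr. rewrite Rmin_left in Hr by lra. rewrite Rmax_right in Hr by lra.
    assert (Hr2 : u k <= r < u (S k)) by lra.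
    unfold f. unfold xtilde. rewrite (xhat_cell k r) by (auto; lra).
    destruct (Rle_dec (Fbar p a b n k) r).
    + unfold lam', N, lam. destruct (k <? 2^n - 1); reflexivity.
    + exfalso. unfold tk in Hr. destruct Hr as [H1 H2].
      revert H1. unfold Rmax, Rmin. destruct (Rle_dec (Fbar p a b n k) (u (S k)));
       destruct (Rle_dec (u k) _); lra.
Qed.

Lemma cells j : (j <= N)%nat -> is_RInt f (u 0) (u j) (sumN Vk j).
Proof.
  induction j; intros H; simpl.
  - replace 0 with ((u 0 - u 0) * 0) by ring.
    eapply is_RInt_ext. 2: apply constR. intros x Hx. rewrite Rmin_left, Rmax_left in Hx by lra. lra.
  - apply ChaslesR with (u j). apply IHj; lia. apply cell; lia.
Qed.

Lemma Vk_lb k : (k < N)%nat -> Vk k > cc k * ((b - a) * q k).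
Proof.
  intros Hk.
  assert (HU : u k < u (S k)). { pose proof (u_step k). pose proof (q_pos k). nra. }
  assert (Ht : u k <= tk k <= u (S k)).
  { unfold tk. split. apply Rmax_l. apply Rmax_lub. lra. apply Rmin_r. }
  assert (L1 : lam k > cc k) by apply lam_k.
  assert (L2 : lam' k > cc k).
  { unfold lam'. destruct (Nat.ltb k (N-1)) eqn:E. apply Nat.ltb_lt in E. apply lam_Sk. lia. auto. }
  rewrite <- u_step. unfold Vk.
  set (m := Rmin (lam k) (lam' k)).
  assert (m > cc k) by (unfold m, Rmin; destruct (Rle_dec _ _); lra).
  assert (lam k >= m) by (unfold m, Rmin; destruct (Rle_dec _ _); lra).
  assert (lam' k >= m) by (unfold m, Rmin; destruct (Rle_dec _ _); lra).
  nra.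
Qed.

Lemma main_ineq : exists V, is_RInt f a b V /\ V / (b - a) > INR n * Hent p - 1 - 2 * log2 (rho p).
Proof.
  exists (sumN Vk N). split.
  - replace a with (u 0) by (unfold u, Sm; simpl; ring). rewrite <- u_N. apply cells. lia.
  - apply Rmult_gt_reg_r with (b - a). lra.
    unfold Rdiv. rewrite Rmult_assoc, Rinv_l, Rmult_1_r by lra.
    apply Rle_lt_trans with (sumN (fun k => cc k * ((b - a) * q k)) N).
    { right. rewrite (sumN_ext _ (fun k => (b - a) * (q k * - log2 (q k)) + (-((b-a) * (2 * log2 (rho p) + 1))) * q k)).
      2:{ intros; unfold cc; ring. }
      rewrite sumN_plus, !sumN_scal. unfold q, N. rewrite sum_ent, sum_prob by auto. ring. }
    apply sumN_lt. unfold N; apply pow2_pos. intros; apply Vk_lb; auto.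
Qed.

End A.

Theorem theorem2 (p : bool -> R)
  (hp0 : 0 < p false < 1) (hp1 : 0 < p true < 1)
  (hsum : p false + p true = 1) (hneq : p false <> p true)
  (a b : R) (ha : 0 <= a) (hab : a < b) (hb : b <= 1) (n : nat) :
  exists pr : Riemann_integrable
                (fun r => IZR (lambda_h p a b n (xtilde p a b n r))) a b,
    RiemannInt pr / (b - a) > INR n * Hent p - 1 - 2 * log2 (rho p).
Proof.
  destruct (main_ineq p hp0 hp1 hsum a b ha hab hb n) as [V [HV HI]].
  exists (ex_RInt_Reals_0 _ _ _ (ex_intro _ V HV)).
  rewrite <- RInt_Reals, (is_RInt_unique _ _ _ _ HV). exact HI.
Qed.
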